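(* Let $L\ge 3$ be an integer and $\lambda>0$. For every $\bm a=a_1\cdots a_L\in\{0,1\}^L$ with $\mathrm{wt}(\bm a)=2$, let $\Lambda(\bm a)$ be the largest eigenvalue of the operator $\hat P_{\bm a}(\hat\Pi^{(\mathrm{ph})}_{\bm a}-\lambda\hat\Pi)\hat P_{\bm a}$ restricted to the two-dimensional subspace $\mathrm{span}\{|i\rangle: a_i=1\}$, and let $\Omega^{(1)}_+(\lambda):=\max_{\bm a:\,\mathrm{wt}(\bm a)=2}\Lambda(\bm a)$. Then $$\Omega^{(1)}_+(\lambda)=\frac{3-2\lambda+\sqrt{1+2\lambda^2}}{4},$$ and this quantity is non-negative if $\lambda\le 3+\sqrt5$.
   Context: Work in $\mathbb C^L$ with orthonormal basis $\{|1\rangle,\dots,|L\rangle\}$; $\hat P(|\psi\rangle)=|\psi\rangle\langle\psi|$ and $\delta$ is the Kronecker delta. For $\bm a\in\{0,1\}^L$, $\mathrm{wt}(\bm a)$ is the number of $1$'s. $\hat\Pi$ is the real symmetric tridiagonal $L\times L$ matrix with $\langle i|\hat\Pi|i\rangle=1/2$ for $1\le i\le L$, $\langle i|\hat\Pi|i+1\rangle=\langle i+1|\hat\Pi|i\rangle=-1/(2\sqrt2)$ for $i\in\{1,L-1\}$, and $\langle i|\hat\Pi|i+1\rangle=\langle i+1|\hat\Pi|i\rangle=-1/4$ for $2\le i\le L-2$ (all other entries zero). For $\bm a\in\{0,1\}^L$, $\hat\Pi^{(\mathrm{ph})}_{\bm a}$ is the diagonal operator $$\hat\Pi^{(\mathrm{ph})}_{\bm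 a}=\delta_{a_2,1}\hat P(|1\rangle)+\sum_{i=2}^{L-1}\frac{\delta_{a_{i-1},1}+\delta_{a_{i+1},1}}{2}\hat P(|i\rangle)+\delta_{a_{L-1},1}\hat P(|L\rangle),$$ and $\hat P_{\bm a}=\sum_{i=1}^L\delta_{a_i,1}\hat P(|i\rangle)$. *)

(* Defs.v *)
(* over an abstract R : realType. Indices are 0-based: 'I_L. *)
From HB Require Import structures.
From mathcomp Require Import all_boot all_order all_algebra.
From mathcomp Require Import reals.
Set Implicit Arguments. Unset Strict Implicit. Unset Printing Implicit Defensive.
Import Order.TTheory GRing.Theory Num.Theory.
Local Open Scope ring_scope.

Section Defs.
Variables (R : realType) (L : nat).

Definition wt (a : 'I_L -> bool) : nat := #|[set i | a i]|.

(* the bit a_{k+1} (0-based k) as a real number 0/1; 0 outside the range *)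
Definition abit (a : 'I_L -> bool) (k : nat) : R :=
  match (insub k : option 'I_L) with Some i => (a i)%:R | None => 0 end.

(* hat Pi : tridiagonal; 1-based bond (i,i+1) with i in {1, L-1} has
   weight -1/(2 sqrt 2), others -1/4.  0-based: min index k in {0, L-2}. *)
Definition Pi_mx : 'M[R]_L :=
  \matrix_(i, j)
    if i == j then 1 / 2
    else if (j == i.+1 :> nat) || (i == j.+1 :> nat) then
      (let k := minn i j in
       if (k == 0)%N || (k == L - 2)%N then - 1 / (2 * Num.sqrt 2) else - 1 / 4)
    else 0.

Definition Piph_mx (a : 'I_L -> bool) : 'M[R]_L :=
  \matrix_(i, j)
    if i == j then
      (if (i == 0 :> nat) then abit a 1
       else if (i == L.-1 :> nat) then abit a (L - 2)
       else (abit a i.-1 + abit a i.+1) / 2)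
    else 0.

Definition P_mx (a : 'I_L -> bool) : 'M[R]_L :=
  \matrix_(i, j) if i == j then (a i)%:R else 0.

Definition A_op (lam : R) (a : 'I_L -> bool) : 'M[R]_L :=
  P_mx a *m (Piph_mx a - lam *: Pi_mx) *m P_mx a.

Definition eigval_on (a : 'I_L -> bool) (A : 'M[R]_L) (mu : R) : Prop :=
  exists v : 'cV[R]_L,
    [/\ v != 0, (forall i, ~~ a i -> v i 0 = 0) & A *m v = mu *: v].

Definition is_Lambda (lam : R) (a : 'I_L -> bool) (x : R) : Prop :=
  eigval_on a (A_op lam a) x /\
  (forall mu, eigval_on a (A_op lam a) mu -> mu <= x).

Definition is_Omega1 (lam : R) (w : R) : Prop :=
  [/\ (forall a, wt a = 2%N -> exists x, is_Lambda lam a x),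
      (exists a, wt a = 2%N /\ is_Lambda lam a w) &
      (forall a x, wt a = 2%N -> is_Lambda lam a x -> x <= w)].

End Defs.

(* Main.v *)
Require Import Defs.
From HB Require Import structures.
From mathcomp Require Import all_boot all_order all_algebra.
From mathcomp Require Import reals.
From mathcomp Require Import ring lra zify.
Import Order.TTheory GRing.Theory Num.Theory.
Local Open Scope ring_scope.

Section Aux.
Variables (R : realType) (L : nat).

Lemma root_le (al be c t mu : R) :
  (t - (al + be) / 2) ^+ 2 = ((al - be) / 2) ^+ 2 + c ^+ 2 ->
  (al + be) / 2 <= t ->
  (al - mu) * (be - mu) = c ^+ 2 -> mu <= t.
Proof.
move=> H1 H2 H3.
have H4 : (mu - (al + be) / 2) ^+ 2 = (t - (al + be) / 2) ^+ 2.
  by rewrite H1 -H3; field.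
move: H2 H4; set m := (al + be) / 2 => H2 H4.
nra.
Qed.

Lemma root_is (al be c t : R) :
  (t - (al + be) / 2) ^+ 2 = ((al - be) / 2) ^+ 2 + c ^+ 2 ->
  (al - t) * (be - t) = c ^+ 2.
Proof.
move=> H1; apply/eqP; rewrite -subr_eq0; apply/eqP.
have -> : (al - t) * (be - t) - c ^+ 2 = (t - (al + be) / 2) ^+ 2 - (((al - be) / 2) ^+ 2 + c ^+ 2) by field.
by rewrite H1 subrr.
Qed.

Lemma AopE lam (a : 'I_L -> bool) i j :
  A_op lam a i j = (a i)%:R * (Piph_mx R a i j - lam * Pi_mx R L i j) * (a j)%:R.
Proof.
rewrite /A_op !mxE (bigD1 j) //= big1 => [|k kj]; last first.
  by rewrite [P_mx R a k j]mxE (negbTE kj) mulr0.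
rewrite addr0 [P_mx R a j j]mxE eqxx !mxE (bigD1 i) //= big1 => [|k ki]; last first.
  by rewrite mxE eq_sym (negbTE ki) mul0r.
by rewrite addr0 mxE eqxx !mxE.
Qed.


End Aux.

Section Eig.
Variables (R : realType) (L : nat) (lam : R) (a : 'I_L -> bool) (p q : 'I_L).
Hypothesis pq : p != q.
Hypothesis Ha : forall i, a i = (i == p) || (i == q).

Let A := A_op lam a.

Lemma A_out i j : ~~ a i || ~~ a j -> A i j = 0.
Proof.
rewrite /A AopE; case/orP => /negbTE ->; by rewrite ?mulr0 ?mul0r.
Qed.

Lemma mulv (v : 'cV[R]_L) i : (forall k, ~~ a k -> v k 0 = 0) ->
  (A *m v) i 0 = A i p * v p 0 + A i q * v q 0.
Proof.
move=> Hv; rewrite mxE (bigD1 p) //= (bigD1 q) /=; last by rewrite eq_sym.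
rewrite big1 ?addr0 ?addrA // => k /andP [kp kq].
by rewrite Hv ?mulr0 // Ha negb_or kp.
Qed.

Lemma eig_det mu : eigval_on a A mu ->
  (A p p - mu) * (A q q - mu) = A p q * A q p.
Proof.
case=> v [vn0 Hv Hev].
have E1 := congr1 (fun M : 'cV[R]_L => M p 0) Hev; have E2 := congr1 (fun M : 'cV[R]_L => M q 0) Hev.
move: E1 => /=; rewrite mulv // [in RHS]mxE => E1.
move: E2 => /=; rewrite mulv // [in RHS]mxE => E2.
set x := v p 0 in E1 E2; set y := v q 0 in E1 E2.
set D := (A p p - mu) * (A q q - mu) - A p q * A q p.
have Dx : D * x = 0.
  have -> : D * x = (A q q - mu) * (A p p * x + A p q * y - mu * x) - A p q * (A q p * x + A q q * y - mu * y) by rewrite /D; ring.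
  by rewrite E1 E2; ring.
have Dy : D * y = 0.
  have -> : D * y = (A p p - mu) * (A q p * x + A q q * y - mu * y) - A q p * (A p p * x + A p q * y - mu * x) by rewrite /D; ring.
  by rewrite E1 E2; ring.
apply/eqP; rewrite -subr_eq0 -/D; apply/negPn/negP => HD.
move: vn0.
have x0 : x = 0 by move/eqP: Dx; rewrite mulf_eq0 (negbTE HD) /= => /eqP.
have y0 : y = 0 by move/eqP: Dy; rewrite mulf_eq0 (negbTE HD) /= => /eqP.
move=> /negP; apply; apply/eqP/matrixP => i j; rewrite (ord1 j) mxE.
case: (boolP (a i)) => [|/Hv //]; rewrite Ha => /orP [] /eqP ->; by [].
Qed.

Lemma eig_vec mu x y : (x != 0) || (y != 0) ->
  A p p * x + A p q * y = mu * x -> A q p * x + A q q * y = mu * y ->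
  eigval_on a A mu.
Proof.
move=> nz E1 E2.
pose v : 'cV[R]_L := \col_i (if i == p then x else if i == q then y else 0).
have vp : v p 0 = x by rewrite mxE eqxx.
have vq : v q 0 = y by rewrite mxE eq_sym (negbTE pq) eqxx.
have Hv : forall k, ~~ a k -> v k 0 = 0.
  by move=> k; rewrite Ha negb_or => /andP [/negbTE kp /negbTE kq]; rewrite mxE kp kq.
exists v; split => //.
  apply/negP => /eqP v0; move: nz; rewrite -vp -vq v0 !mxE eqxx //.
apply/matrixP => i j; rewrite (ord1 j) mulv // vp vq [in RHS]mxE.
case: (boolP (a i)) => [|ai].
  rewrite Ha => /orP [] /eqP ->; rewrite ?vp ?vq //.
rewrite (Hv _ ai) !A_out; first by rewrite !mul0r addr0 mulr0.
all: by rewrite ai.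
Qed.


Lemma lambda_t t : A q p = A p q ->
  (t - (A p p + A q q) / 2) ^+ 2 = ((A p p - A q q) / 2) ^+ 2 + (A p q) ^+ 2 ->
  (A p p + A q q) / 2 <= t -> is_Lambda lam a t.
Proof.
move=> Hs H1 H2; split.
  have Hr := @root_is R _ _ _ _ H1.
  have [c0|c0] := eqVneq (A p q) 0.
    move: Hr; rewrite c0 expr0n /= => /eqP; rewrite mulf_eq0 !subr_eq0 => /orP [] /eqP Ht.
      apply: (@eig_vec _ 1 0); first by rewrite oner_eq0.
        by rewrite c0 Ht; ring.
      by rewrite Hs c0; ring.
    apply: (@eig_vec _ 0 1); first by rewrite oner_eq0 orbT.
      by rewrite c0; ring.
    by rewrite Hs c0 Ht; ring.
  apply: (@eig_vec _ (A p q) (t - A p p)); first by rewrite c0.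
    by ring.
  rewrite Hs; rewrite expr2 in Hr; rewrite -Hr; ring.
move=> mu /eig_det; rewrite Hs -expr2 => Hmu.
exact: (@root_le R _ _ _ _ _ H1 H2 Hmu).
Qed.

End Eig.


Lemma ineq1 (R : realType) (lam : R) : 0 < lam -> (1 / 2 - lam / 2 + (1 / 2 - lam / 2)) / 2 <= 1 / 2 - lam / 4.
Proof. move=> *; lra. Qed.
Lemma ineq2 (R : realType) (lam s : R) : lam - 1 <= s -> 1 / 2 - lam / 4 <= (3 - 2 * lam + s) / 4.
Proof. move=> *; lra. Qed.
Lemma ineq3 (R : realType) (lam : R) : (- lam / 2 + - lam / 2) / 2 <= - lam / 2.
Proof. move=> *; lra. Qed.
Lemma ineq4 (R : realType) (lam s : R) : 0 <= s -> - lam / 2 <= (3 - 2 * lam + s) / 4.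
Proof. move=> *; lra. Qed.

Section Conc.
Variables (R : realType) (L : nat) (lam : R) (a : 'I_L -> bool) (p q : 'I_L).
Hypothesis L3 : (3 <= L)%N.
Hypothesis lam0 : 0 < lam.
Hypothesis pq : (p < q)%N.
Hypothesis Ha : forall i, a i = (i == p) || (i == q).

Lemma abitE k : abit R a k = ((k == p) || (k == q))%:R.
Proof.
rewrite /abit; case: insubP => [i Hk Hi|Hk].
  by rewrite Ha -!(inj_eq val_inj) /= Hi.
have Hp := ltn_ord p; have Hq := ltn_ord q.
have -> : (k == p) = false by apply/negP => /eqP E; move: Hk; rewrite E Hp.
have -> : (k == q) = false by apply/negP => /eqP E; move: Hk; rewrite E Hq.
by [].
Qed.

Lemma App : A_op lam a p p = Piph_mx R a p p - lam / 2.
Proof. by rewrite AopE !Ha !eqxx ?orbT /= !mulr1n [Pi_mx R L p p]mxE eqxx; field. Qed.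
Lemma Aqq : A_op lam a q q = Piph_mx R a q q - lam / 2.
Proof. by rewrite AopE !Ha !eqxx ?orbT /= !mulr1n [Pi_mx R L q q]mxE eqxx; field. Qed.
Lemma Apq : A_op lam a p q = - lam * Pi_mx R L p q.
Proof.
have pq' : p != q by rewrite -(inj_eq val_inj) /= neq_ltn pq.
by rewrite AopE !Ha !eqxx ?orbT /= !mulr1n [Piph_mx R a p q]mxE (negbTE pq'); ring.
Qed.
Lemma Aqp : A_op lam a q p = - lam * Pi_mx R L q p.
Proof.
have pq' : q != p by rewrite -(inj_eq val_inj) /= neq_ltn pq orbT.
by rewrite AopE !Ha !eqxx ?orbT /= !mulr1n [Piph_mx R a q p]mxE (negbTE pq'); ring.
Qed.

Lemma Pisym : Pi_mx R L q p = Pi_mx R L p q.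
Proof. by rewrite !mxE eq_sym orbC minnC. Qed.


Lemma Dp : Piph_mx R a p p =
  if (p == 0 :> nat) then ((q == 1 :> nat) : nat)%:R else ((q == p.+1 :> nat) : nat)%:R / 2.
Proof.
have Hq := ltn_ord q.
rewrite mxE eqxx; case: eqP => [p0|p0].
  by rewrite abitE p0 /= eq_sym.
have -> : (p == L.-1 :> nat) = false by apply/eqP; lia.
rewrite !abitE.
have -> : (p.-1 == p :> nat) = false by apply/eqP; lia.
have -> : (p.-1 == q :> nat) = false by apply/eqP; lia.
have -> : (p.+1 == p :> nat) = false by apply/eqP; lia.
by rewrite add0r eq_sym.
Qed.

Lemma Dq : Piph_mx R a q q =
  if (q == L.-1 :> nat) then ((p == (L - 2)%N :> nat) : nat)%:R else ((p == q.-1 :> nat) : nat)%:R / 2.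
Proof.
have Hq := ltn_ord q.
rewrite mxE eqxx.
have -> : (q == 0 :> nat) = false by apply/eqP; lia.
case: eqP => [q0|q0].
  rewrite abitE.
  have -> : ((L - 2)%N == q :> nat) = false by apply/eqP; lia.
  by rewrite orbF eq_sym.
rewrite !abitE.
have -> : (q.-1 == q :> nat) = false by apply/eqP; lia.
have -> : (q.+1 == q :> nat) = false by apply/eqP; lia.
have -> : (q.+1 == p :> nat) = false by apply/eqP; lia.
by rewrite orbF addr0 eq_sym.
Qed.

Lemma Pipq : Pi_mx R L p q =
  if (q == p.+1 :> nat) then
    (if (p == 0 :> nat) || (p == (L - 2)%N :> nat) then - 1 / (2 * Num.sqrt 2) else - 1 / 4)
  else 0.
Proof.
rewrite mxE.
have -> : (p == q) = false by apply/eqP => E; move: pq; rewrite E ltnn.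
have -> : (p == q.+1 :> nat) = false by apply/eqP; lia.
rewrite orbF; case: eqP => // _.
by rewrite (minn_idPl (ltnW pq)).
Qed.


Let s := Num.sqrt (1 + 2 * lam ^+ 2).
Let w := (3 - 2 * lam + s) / 4.

Lemma s_facts : 0 <= s /\ s ^+ 2 = 1 + 2 * lam ^+ 2.
Proof.
split; first exact: sqrtr_ge0.
rewrite sqr_sqrtr //; apply: addr_ge0 => //; apply: mulr_ge0 => //; exact: sqr_ge0.
Qed.

Lemma r2_facts : 0 < Num.sqrt 2 :> R /\ Num.sqrt 2 ^+ 2 = 2 :> R.
Proof. by split; [rewrite sqrtr_gt0 ltr0n | rewrite sqr_sqrtr ?ler0n]. Qed.

Lemma endcase (al be : R) : al + be = 3 / 2 - lam -> (al - be) ^+ 2 = 1 / 4 ->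
  (w - (al + be) / 2) ^+ 2 = ((al - be) / 2) ^+ 2 + (- lam * (- 1 / (2 * Num.sqrt 2))) ^+ 2
  /\ (al + be) / 2 <= w.
Proof.
move=> H1 H2; have [s0 s2] := s_facts; have [r0 r2] := r2_facts.
rewrite H1; split; last by rewrite /w; lra.
have -> : (w - (3 / 2 - lam) / 2) ^+ 2 = s ^+ 2 / 16 by rewrite /w; field.
have -> : ((al - be) / 2) ^+ 2 = (al - be) ^+ 2 / 4 by field.
have -> : (- lam * (- 1 / (2 * Num.sqrt 2))) ^+ 2 = lam ^+ 2 / (4 * Num.sqrt 2 ^+ 2).
  by field; rewrite gt_eqF.
by rewrite s2 H2 r2; field.
Qed.


Lemma le_help (x y : R) : x <= y -> x <= y.
Proof. by []. Qed.

Lemma s_ge : lam - 1 <= s.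
Proof. have [s0 s2] := s_facts; nra. Qed.

Lemma main_case : exists t, [/\ is_Lambda lam a t, t <= w &
  ((p == 0 :> nat) -> (q == 1 :> nat) -> t = w)].
Proof.
have pq' : p != q by rewrite -(inj_eq val_inj) /= neq_ltn pq.
have Hq := ltn_ord q.
have [s0 s2] := s_facts.
have Hs : A_op lam a q p = A_op lam a p q by rewrite Aqp Apq Pisym.
have LT := @lambda_t R L lam a p q pq' Ha.
case: (eqVneq (q : nat) p.+1) => E.
  case: (eqVneq (p : nat) 0) => P0.
    have ha : A_op lam a p p = 1 - lam / 2.
      by rewrite App Dp P0 /=; have -> : (q == 1 :> nat) by apply/eqP; lia.
    have hb : A_op lam a q q = 1 / 2 - lam / 2.
      rewrite Aqq Dq; have -> : (q == L.-1 :> nat) = false by apply/eqP; lia.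
      by rewrite E eqxx /=; field.
    have hc : A_op lam a p q = - lam * (- 1 / (2 * Num.sqrt 2)).
      by rewrite Apq Pipq E eqxx P0.
    rewrite ha hb hc in LT.
    have e1 : (1 - lam / 2) + (1 / 2 - lam / 2) = 3 / 2 - lam by field.
    have e2 : ((1 - lam / 2) - (1 / 2 - lam / 2)) ^+ 2 = 1 / 4 by field.
    have [H1 H2] := endcase _ _ e1 e2.
    exists w; split => //.
    by apply: LT => //; rewrite -hc.
  have ha : A_op lam a p p = 1 / 2 - lam / 2.
    by rewrite App Dp (negbTE P0) E eqxx /=; field.
  have P0' : (p == 0 :> nat) = false by apply/negbTE.
  case: (eqVneq (p : nat) (L - 2)%N) => P2.
    have hb : A_op lam a q q = 1 - lam / 2.
      rewrite Aqq Dq; have -> : (q == L.-1 :> nat) by apply/eqP; lia.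
      by rewrite P2 eqxx.
    have hc : A_op lam a p q = - lam * (- 1 / (2 * Num.sqrt 2)).
      by rewrite Apq Pipq E eqxx P0' P2 eqxx.
    rewrite ha hb hc in LT.
    have e1 : (1 / 2 - lam / 2) + (1 - lam / 2) = 3 / 2 - lam by field.
    have e2 : ((1 / 2 - lam / 2) - (1 - lam / 2)) ^+ 2 = 1 / 4 by field.
    have [H1 H2] := endcase _ _ e1 e2.
    exists w; split => //.
      by apply: LT => //; rewrite -hc.
  have hb : A_op lam a q q = 1 / 2 - lam / 2.
    rewrite Aqq Dq; have -> : (q == L.-1 :> nat) = false by apply/eqP; lia.
    by rewrite E /= eqxx /=; field.
  have hc : A_op lam a p q = - lam * (- 1 / 4).
    by rewrite Apq Pipq E eqxx P0' (negbTE P2).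
  rewrite ha hb hc in LT.
  have := s_ge => sg.
  exists (1 / 2 - lam / 4); split.
  - apply: LT; first by rewrite -hc.
      by field.
    exact: ineq1.
  - exact: ineq2.
  - by [].
have ha : A_op lam a p p = - lam / 2.
  rewrite App Dp; case: ifP => [/eqP P0|_].
    have -> : (q == 1 :> nat) = false by apply/eqP; lia.
    by rewrite /=; field.
  by rewrite (negbTE E) /=; field.
have hb : A_op lam a q q = - lam / 2.
  rewrite Aqq Dq; case: ifP => _.
    have -> : (p == (L - 2)%N :> nat) = false by apply/eqP; lia.
    by rewrite /=; field.
  have -> : (p == q.-1 :> nat) = false by apply/eqP; lia.
  by rewrite /=; field.
have hc : A_op lam a p q = 0.
  by rewrite Apq Pipq (negbTE E) mulr0.
rewrite ha hb hc in LT.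
exists (- lam / 2); split.
- apply: LT; first by rewrite -hc.
    by field.
  exact: ineq3.
- exact: ineq4.
- move=> /eqP P0 /eqP Q1; exfalso; move/eqP: E; apply; lia.
Qed.

End Conc.


Lemma partB (R : realType) (lam s r : R) : 0 <= s -> s ^+ 2 = 1 + 2 * lam ^+ 2 ->
  0 <= r -> r ^+ 2 = 5 -> lam <= 3 + r -> 0 <= (3 - 2 * lam + s) / 4.
Proof.
move=> s0 s2 r0 r2 lr.
rewrite real_leNgt ?realE ?le_total //; apply/negP => H.
have H1 : s < 2 * lam - 3 by lra.
have H2 : s ^+ 2 < (2 * lam - 3) ^+ 2.
  rewrite ltr_pXn2r //; rewrite ?nnegrE //; lra.
have H3 : r ^+ 2 < (lam - 3) ^+ 2 by rewrite r2; rewrite s2 in H2; nra.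
have [l3|l3] := lerP 3 lam.
  have : r < lam - 3.
    by rewrite -(ltr_pXn2r (n := 2)) // ?nnegrE; lra.
  lra.
have : r < 3 - lam.
  rewrite -(ltr_pXn2r (n := 2)) // ?nnegrE; last lra.
  by have -> : (3 - lam) ^+ 2 = (lam - 3) ^+ 2 by ring.
nra.
Qed.

Lemma lam_uniq (R : realType) (L : nat) (lam : R) (a : 'I_L -> bool) x t :
  is_Lambda lam a x -> is_Lambda lam a t -> x <= t.
Proof. by move=> [Ex _] [_ Mt]; apply: Mt. Qed.

Lemma wt2P (L : nat) (a : 'I_L -> bool) : wt a = 2%N ->
  exists p q : 'I_L, (p < q)%N /\ forall i, a i = (i == p) || (i == q).
Proof.
move=> /eqP /cards2P [x [y [xy E]]].
have Ha : forall i, a i = (i == x) || (i == y).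
  by move=> i; rewrite -in_set2 -E inE.
case: (ltngtP x y) => H.
- by exists x, y.
- by exists y, x; split => // i; rewrite orbC.
- by move: xy; rewrite -(inj_eq val_inj) /= H eqxx.
Qed.

Theorem lemma1 (R : realType) (L : nat) (lam : R) :
  (3 <= L)%N -> 0 < lam ->
  is_Omega1 L lam ((3 - 2 * lam + Num.sqrt (1 + 2 * lam ^+ 2)) / 4) /\
  (lam <= 3 + Num.sqrt 5 -> 0 <= (3 - 2 * lam + Num.sqrt (1 + 2 * lam ^+ 2)) / 4).
Proof.
move=> L3 lam0; split; last first.
  apply: partB; rewrite ?sqrtr_ge0 ?sqr_sqrtr //.
    apply: addr_ge0 => //; apply: mulr_ge0 => //; exact: sqr_ge0.
split.
- move=> a /wt2P [p [q [pq Ha]]].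
  have [t [Ht _ _]] := main_case _ _ _ _ _ _ L3 lam0 pq Ha.
  by exists t.
- have L0 : (0 < L)%N by lia.
  have L1 : (1 < L)%N by lia.
  pose p := Ordinal L0; pose q := Ordinal L1.
  pose a := fun i : 'I_L => (i == p) || (i == q).
  have pq : (p < q)%N by [].
  have [t [Ht tw E]] := main_case _ _ _ _ _ _ L3 lam0 pq (fun i => erefl (a i)).
  exists a; split; last by rewrite -E.
  rewrite /wt; have -> : [set i | a i] = [set p; q] by apply/setP => i; rewrite !inE.
  by rewrite /wt cards2 -(inj_eq val_inj).
- move=> a x /wt2P [p [q [pq Ha]]] Hx.
  have [t [Ht tw _]] := main_case _ _ _ _ _ _ L3 lam0 pq Ha.
  exact: (le_trans (@lam_uniq _ _ _ _ _ _ Hx Ht) tw).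
Qed.
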